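(* Fix $c > 0$ and $p \in (0,1)$. For $x^{\text{obs}} > c$ let $\theta_{\text{2-sided}}(p)$ denote the unique $\theta \in \mathbb{R}$ solving $F_{\text{2-sided}}(x^{\text{obs}},\theta,c) = p$. Then as $x^{\text{obs}} \downarrow c$, $\theta_{\text{2-sided}}(p)$ converges to a finite limit, namely the unique $\theta \in \mathbb{R}$ solving $$p = \frac{\Phi(-c-\theta)}{\Phi(-c-\theta) + \Phi(-c+\theta)}.$$ In particular, for $p = 0.5$ the limit is $0$, i.e. the conditionally median-unbiased estimator $\theta_{\text{2-sided}}(0.5) \to 0$ as $x^{\text{obs}} \downarrow c$.
   Context: Let $\Phi$ denote the standard normal distribution function and let $c>0$. For $X \sim N(\theta,1)$, the distribution function of $X$ conditional on $|X| \ge c$ is $$F_{\text{2-sided}}(a,\theta,c) = \Pr(X \le a \mid |X| \ge c) = \frac{\min\big(\Phi(a-\theta), \Phi(-c-\theta)\big) + \mathbf{1}_{a > c}\big(\Phi(a-\theta) - \Phi(c-\theta)\big)}{\Phi(-c-\theta) + \Phi(-c+\theta)},$$ where $\mathbf{1}_{a>c}$ equals $1$ if $a > c$ and $0$ otherwise. For $x^{\text{obs}} > c$ the map $\theta \mapsto F_{\text{2-sided}}(x^{\text{obs}},\theta,c)$ is assumed (as in the paper) to be a continuous strictly decreasing bijection from $\mathbb{R}$ onto $(0,1)$, so that $\theta_{\text{2-sided}}(p)$ is well defined. *)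

(* Defs.v *)
From Stdlib Require Import Reals.
From Coquelicot Require Import Coquelicot.
Open Scope R_scope.

Definition phi_dens (t : R) : R := exp (- t ^ 2 / 2) / sqrt (2 * PI).

(* standard normal distribution function: Phi x = int_{-oo}^x phi_dens,
   written as 1/2 + int_0^x phi_dens (the density is even and integrates to 1) *)
Definition Phi (x : R) : R := / 2 + RInt phi_dens 0 x.

Definition ind_gt (a c : R) : R := if Rlt_dec c a then 1 else 0.

(* F_{2-sided}(a, theta, c) = Pr(X <= a | |X| >= c), X ~ N(theta,1) *)
Definition F2 (a theta c : R) : R :=
  (Rmin (Phi (a - theta)) (Phi (- c - theta))
     + ind_gt a c * (Phi (a - theta) - Phi (c - theta)))
  / (Phi (- c - theta) + Phi (- c + theta)).

Definition G2 (theta c : R) : R :=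
  Phi (- c - theta) / (Phi (- c - theta) + Phi (- c + theta)).

(* Main.v *)
Require Import Defs.
From Stdlib Require Import Reals Lra.
From Coquelicot Require Import Coquelicot.
Open Scope R_scope.

Lemma phi_cont x : continuous phi_dens x.
Proof. apply (ex_derive_continuous (K:=R_AbsRing) (V:=R_NormedModule)). unfold phi_dens. auto_derive. auto. Qed.

Lemma phi_pos x : 0 < phi_dens x.
Proof. unfold phi_dens. apply Rdiv_lt_0_compat. apply exp_pos.
apply sqrt_lt_R0. pose proof PI_RGT_0. lra. Qed.

Lemma phi_le x : phi_dens x <= / 2.
Proof. unfold phi_dens.
assert (H1: exp (- x ^ 2 / 2) <= 1).
{ rewrite <- exp_0. destruct (Req_dec x 0). subst. right. f_equal. field.
  left. apply exp_increasing. assert (0 < x^2) by (simpl; nra). nra. }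
assert (H2: 2 < sqrt (2 * PI)).
{ assert (E: sqrt (2*2) = 2) by (apply sqrt_square; lra).
  rewrite <- E at 1. apply sqrt_lt_1_alt. pose proof PI2_3_2. lra. }
apply Rmult_le_reg_r with (sqrt (2*PI)). lra. unfold Rdiv. rewrite Rmult_assoc, Rinv_l by lra. lra. Qed.

Lemma phi_ex a b : ex_RInt phi_dens a b.
Proof. apply (ex_RInt_continuous (V:=R_CompleteNormedModule)). intros; apply phi_cont. Qed.

Lemma Phi_diff a b : Phi b - Phi a = RInt phi_dens a b.
Proof. unfold Phi. rewrite <- (RInt_Chasles phi_dens 0 a b) by apply phi_ex.
 unfold plus; simpl. ring. Qed.

Lemma Phi_incr a b : a < b -> Phi a < Phi b.
Proof. intros. assert (0 < Phi b - Phi a); [|lra]. rewrite Phi_diff.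
 apply RInt_gt_0; auto. intros; apply phi_pos. intros; apply phi_cont. Qed.

Lemma Phi_le a b : a <= b -> Phi a <= Phi b.
Proof. intros [H|H]. left; now apply Phi_incr. subst; lra. Qed.

Lemma Phi_0 : Phi 0 = / 2.
Proof. unfold Phi. rewrite RInt_point. unfold zero; simpl. ring. Qed.

Lemma Phi_ge_half y : 0 <= y -> / 2 <= Phi y.
Proof. intros. rewrite <- Phi_0. now apply Phi_le. Qed.

Lemma Phi_lip a b : a <= b -> Phi b - Phi a <= (b - a) / 2.
Proof. intros. rewrite Phi_diff.
 replace ((b-a)/2) with (RInt (fun _ => /2) a b).
 apply RInt_le; auto. apply phi_ex. apply ex_RInt_const. intros; apply phi_le.
 rewrite RInt_const. unfold scal; simpl. unfold mult; simpl. field. Qed.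

Lemma Phi_cont x : continuity_pt Phi x.
Proof.
 assert (H: is_derive (RInt phi_dens 0) x (phi_dens x)).
 { apply is_derive_RInt with 0.
   apply filter_forall. intros. apply (RInt_correct (V:=R_CompleteNormedModule)), phi_ex. apply phi_cont. }
 assert (H2: continuity_pt (RInt phi_dens 0) x).
 { apply continuity_pt_filterlim. apply (ex_derive_continuous (K:=R_AbsRing) (V:=R_NormedModule)). eexists; exact H. }
 unfold Phi. change (continuity_pt (plus_fct (fun _ => /2) (RInt phi_dens 0)) x).
 apply continuity_pt_plus; auto. apply continuity_pt_const. intros ? ?; auto. Qed.

Lemma F2_form x t c : 0 < c -> c < x ->
  F2 x t c = (Phi (-c-t) + (Phi (x-t) - Phi (c-t))) / (Phi (-c-t) + Phi (-c+t)).
Proof. intros. unfold F2, ind_gt. rewrite Rmin_right.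
 destruct (Rlt_dec c x); [|lra]. f_equal; ring.
 apply Phi_le; lra. Qed.

Lemma div_lt a b c d : 0 < b -> 0 < d -> a * d < c * b -> a / b < c / d.
Proof. intros. replace (a/b) with ((a*d) * /(b*d)) by (field; lra).
 replace (c/d) with ((c*b) * /(b*d)) by (field; lra).
 apply Rmult_lt_compat_r; auto. apply Rinv_0_lt_compat. nra. Qed.

Lemma dec_le (f : R -> R) : (forall a b, a < b -> f b < f a) ->
  forall a b, a <= b -> f b <= f a.
Proof. intros H a b [h|h]. left; auto. subst; lra. Qed.

Lemma Phi_pos c (hc : 0 < c)
  (h : forall t, 0 < F2 (c+1) t c < 1) : forall y, 0 < Phi y.
Proof.
 intros y. destruct (Rlt_or_le 0 (Phi y)) as [H|H]; auto. exfalso.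
 set (t := c + 1 + Rabs y).
 pose proof (Rabs_pos y). pose proof (Rle_abs (-y)). rewrite Rabs_Ropp in *.
 assert (K1 : Phi (c + 1 - t) <= Phi y) by (apply Phi_le; unfold t; lra).
 assert (K2 : Phi (-c-t) < Phi (c-t)) by (apply Phi_incr; lra).
 assert (K3 : / 2 <= Phi (-c+t)) by (apply Phi_ge_half; unfold t; lra).
 assert (K4 : Phi (c+1-t) - Phi (c-t) <= ((c+1-t) - (c-t))/2) by (apply Phi_lip; lra).
 specialize (h t). rewrite F2_form in h by lra.
 set (N := Phi (-c-t) + (Phi (c+1-t) - Phi (c-t))) in *.
 set (D := Phi (-c-t) + Phi (-c+t)) in *.
 assert (HN : N < 0) by (unfold N; lra).
 destruct (Rtotal_order D 0) as [HD|[HD|HD]].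
 - assert (E : N = (N/D) * D) by (field; lra).
   assert (N - D > 0) by nra. unfold N, D in *. lra.
 - rewrite HD in h. unfold Rdiv in h. rewrite Rinv_0 in h. lra.
 - assert (N / D < 0). { unfold Rdiv. assert (0 < /D) by (apply Rinv_0_lt_compat; auto). nra. }
   lra.
Qed.

Theorem mainTheorem5 (c p : R) (hc : 0 < c) (hp : 0 < p < 1)
  (hF : forall x, c < x ->
     (forall t1 t2, t1 < t2 -> F2 x t2 c < F2 x t1 c) /\
     (forall t, continuity_pt (fun th => F2 x th c) t) /\
     (forall t, 0 < F2 x t c < 1) /\
     (forall q, 0 < q < 1 -> exists t, F2 x t c = q))
  (th : R -> R) (hth : forall x, c < x -> F2 x (th x) c = p) :
  exists L : R,
    (G2 L c = p /\ forall t, G2 t c = p -> t = L) /\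
    filterlim th (at_right c) (locally L) /\
    (p = / 2 -> L = 0).
Proof.
  assert (PP : forall y, 0 < Phi y).
  { apply (Phi_pos c); auto. apply (hF (c+1)); lra. }
  set (D := fun t => Phi (-c-t) + Phi (-c+t)).
  assert (HD : forall t, 0 < D t) by (intros; unfold D; pose proof (PP (-c-t)); pose proof (PP (-c+t)); lra).
  assert (Gdec : forall t1 t2, t1 < t2 -> G2 t2 c < G2 t1 c).
  { intros. unfold G2. apply div_lt. apply (HD t2). apply (HD t1).
    pose proof (PP (-c-t1)); pose proof (PP (-c-t2)); pose proof (PP (-c+t1)); pose proof (PP (-c+t2)).
    assert (Phi (-c-t2) < Phi (-c-t1)) by (apply Phi_incr; lra).
    assert (Phi (-c+t1) < Phi (-c+t2)) by (apply Phi_incr; lra). nra. }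
  assert (Gle : forall t1 t2, t1 <= t2 -> G2 t2 c <= G2 t1 c) by (intros; apply (dec_le (fun t => G2 t c)); auto).
  assert (Fdiff : forall x t, c < x ->
     0 < F2 x t c - G2 t c /\ F2 x t c - G2 t c <= ((x - c)/2) / D t).
  { intros x t Hx. rewrite F2_form by lra. unfold G2.
    fold (D t).
    replace ((Phi (- c - t) + (Phi (x - t) - Phi (c - t))) / D t - Phi (- c - t) / D t)
      with ((Phi (x - t) - Phi (c - t)) / D t) by (field; specialize (HD t); lra).
    assert (Phi (c-t) < Phi (x-t)) by (apply Phi_incr; lra).
    assert (Phi (x-t) - Phi (c-t) <= ((x-t) - (c-t))/2) by (apply Phi_lip; lra).
    specialize (HD t). split.
    - unfold Rdiv; apply Rmult_lt_0_compat; [lra|]. apply Rinv_0_lt_compat; auto.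
    - unfold Rdiv. apply Rmult_le_compat_r. left; apply Rinv_0_lt_compat; auto. lra. }
  assert (CPhi1 : forall t, continuity_pt (fun t => Phi (-c-t)) t).
  { intros. apply (continuity_pt_comp (fun t => -c-t) Phi). reg. apply Phi_cont. }
  assert (CPhi2 : forall t, continuity_pt (fun t => Phi (-c+t)) t).
  { intros. apply (continuity_pt_comp (fun t => -c+t) Phi). reg. apply Phi_cont. }
  assert (CG : continuity (fun t => p - G2 t c)).
  { intros t. apply (continuity_pt_minus (fun _ => p) (fun t => G2 t c)).
    apply continuity_pt_const; intros ? ?; auto.
    unfold G2. apply (continuity_pt_div (fun t => Phi (-c-t)) (fun t => Phi (-c-t) + Phi (-c+t))).
    auto. apply (continuity_pt_plus (fun t => Phi (-c-t)) (fun t => Phi (-c+t))); auto.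
    specialize (HD t); unfold D in HD; lra. }
  destruct (proj2 (proj2 (proj2 (hF (c+1) ltac:(lra)))) p hp) as [thi Hthi].
  assert (Ghi : G2 thi c < p).
  { destruct (Fdiff (c+1) thi ltac:(lra)). lra. }
  set (dl := (1 - p)/4).
  destruct (proj2 (proj2 (proj2 (hF (c+dl) ltac:(unfold dl; lra)))) ((1+p)/2) ltac:(lra)) as [t' Ht'].
  set (tlo := Rmin t' (-c)).
  assert (Glo : p < G2 tlo c).
  { assert (F2 (c+dl) t' c <= F2 (c+dl) tlo c).
    { apply (dec_le (fun t => F2 (c+dl) t c)). apply (hF (c+dl)). unfold dl; lra.
      apply Rmin_l. }
    destruct (Fdiff (c+dl) tlo ltac:(unfold dl; lra)) as [_ H2].
    assert (/2 <= Phi (-c - tlo)) by (apply Phi_ge_half; pose proof (Rmin_r t' (-c)); unfold tlo in *; lra).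
    assert (HDl : / 2 < D tlo) by (unfold D; pose proof (PP (-c+tlo)); lra).
    assert (((c + dl - c) / 2) / D tlo < dl).
    { unfold Rdiv. apply Rmult_lt_reg_r with (D tlo). lra.
      rewrite Rmult_assoc, Rinv_l by lra. unfold dl in *. nra. }
    unfold dl in *. lra. }
  assert (Hlh : tlo < thi).
  { destruct (Rlt_or_le tlo thi); auto. pose proof (Gle thi tlo H). lra. }
  destruct (IVT (fun t => p - G2 t c) tlo thi CG Hlh ltac:(simpl; lra) ltac:(simpl; lra)) as [L [_ HL]].
  simpl in HL.
  assert (Uniq : forall t, G2 t c = p -> t = L).
  { intros t Ht. destruct (Rtotal_order t L) as [h|[h|h]]; auto.
    - pose proof (Gdec _ _ h); lra.
    - pose proof (Gdec _ _ h); lra. }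
  exists L. split; [split; [lra|auto]|split].
  - apply filterlim_locally. intros eps.
    set (s := L + eps).
    set (g := p - G2 s c).
    assert (Hg : 0 < g) by (unfold g, s; pose proof (Gdec L (L+eps) ltac:(destruct eps; simpl; lra)); lra).
    assert (Hη : 0 < 2 * g * D s) by (specialize (HD s); nra).
    exists (mkposreal _ Hη). intros y Hy Hcy.
    unfold ball in Hy |- *; simpl in Hy |- *. unfold AbsRing_ball, abs, minus, plus, opp in Hy |- *; simpl in Hy |- *.
    apply Rabs_def2 in Hy. destruct Hy as [Hy _].
    pose proof (hth y Hcy) as Hty.
    destruct (hF y Hcy) as [Fd _].
    assert (Lo : L < th y).
    { destruct (Fdiff y (th y) Hcy) as [h1 _].
      destruct (Rlt_or_le L (th y)); auto. pose proof (Gle _ _ H). lra. }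
    assert (Hi : th y < s).
    { destruct (Fdiff y s Hcy) as [_ h2].
      assert (((y - c) / 2) / D s < g).
      { specialize (HD s). unfold Rdiv. apply Rmult_lt_reg_r with (D s). lra.
        rewrite Rmult_assoc, Rinv_l by lra. nra. }
      assert (F2 y s c < p) by (unfold g in *; lra).
      destruct (Rlt_or_le (th y) s); auto.
      pose proof (dec_le _ Fd _ _ H1). lra. }
    apply Rabs_def1; unfold s in Hi; lra.
  - intros Hp. symmetry. apply Uniq. unfold G2.
    replace (-c-0) with (-c) by ring. replace (-c+0) with (-c) by ring.
    pose proof (PP (-c)). rewrite Hp. field. lra.
Qed.
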